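(* Let $\mathbb{F}$ be a finite field and let $t,k,b,\ell$ be positive integers with $\ell<bk$. There exists a $t$-private $k$-party $\ell$-LMSSS over $\mathbb{F}$ in which every party's share lies in $\mathbb{F}^b$ (i.e. $b_1=\dots=b_k=b$) and whose access structure is $\Gamma=\{[k]\}$ (so its information rate is $\ell/(kb)$) if and only if there exists an $\mathbb{F}$-linear code $C\subseteq(\mathbb{F}^b)^k$ with rate at least $\ell/(kb)$ and distance at least $t+1$.
   Context: A $k$-party $\ell$-LMSSS over a finite field $\mathbb{F}$ with access structure $\Gamma$ (monotone increasing family of subsets of $[k]$) and adversary structure $\mathcal{T}$ (monotone decreasing, disjoint from $\Gamma$) is given by integers $e,b_1,\dots,b_k$ and an $\mathbb{F}$-linear map $\mathsf{Share}:\mathbb{F}^\ell\times\mathbb{F}^e\to\mathbb{F}^{b_1}\times\cdots\times\mathbb{F}^{b_k}$ such that for every $Q\in\Gamma$ a linear map recovers $\mathbf{x}$ from $\mathsf{Share}(\mathbf{x},\mathbf{r})_Q$ for all $\mathbf{x},\mathbf{r}$, and for every $U\in\mathcal{T}$ the distribution of $\mathsf{Share}(\mathbf{x},\mathbf{r})_U$ with $\mathbf{r}$ uniform in $\mathbb{F}^e$ does not depend on $\mathbf{x}$. It is $t$-private if $\mathcal{T}$ contains all subsets of size at most $t$; its information rate is $\ell/(b_1+\cdots+b_k)$. An $\mathbb{F}$-linear code with alphabet $\mathbb{F}^b$ and block length $k$ is an $\mathbb{F}$-linear subspace $C\subseteq(\mathbb{F}^b)^k$; its rate is $\dim_{\mathbb{F}}(C)/(bk)$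 and its distance is $\min_{c\ne c'\in C}|\{i\in[k]: c_i\ne c'_i\}|$. *)

(* Defs.v *)
From HB Require Import structures.
From mathcomp Require Import all_boot all_order all_algebra all_field.
Set Implicit Arguments. Unset Strict Implicit. Unset Printing Implicit Defensive.
Import GRing.Theory Num.Theory.
Local Open Scope ring_scope.

(* A k-party linear secret sharing map Share : F^l x F^e -> (F^b)^k with all
   share sizes equal to b.  Any F-linear map of this shape is of the form
   Share(x,r)_i = x *m A i + r *m R i for matrices A i, R i. *)
Definition share (F : fieldType) (k l e b : nat)
  (A : 'I_k -> 'M[F]_(l, b)) (R : 'I_k -> 'M[F]_(e, b))
  (x : 'rV[F]_l) (r : 'rV[F]_e) (i : 'I_k) : 'rV[F]_b :=
  x *m A i + r *m R i.

Definition monotone_incr (k : nat) (G : {set {set 'I_k}}) : Prop :=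
  forall Q Q' : {set 'I_k}, Q \in G -> Q \subset Q' -> Q' \in G.
Definition monotone_decr (k : nat) (T : {set {set 'I_k}}) : Prop :=
  forall U U' : {set 'I_k}, U \in T -> U' \subset U -> U' \in T.

Definition is_LMSSS (F : finFieldType) (k l e b : nat)
  (G T : {set {set 'I_k}})
  (A : 'I_k -> 'M[F]_(l, b)) (R : 'I_k -> 'M[F]_(e, b)) : Prop :=
  [/\ monotone_incr G, monotone_decr T, [disjoint G & T],
      (forall Q, Q \in G -> exists D : 'I_k -> 'M[F]_(b, l),
          forall x r, \sum_(i in Q) share A R x r i *m D i = x) &
      (* privacy: distribution of Share(x,r)_U for uniform r is independent of x *)
      (forall U, U \in T -> forall (x x' : 'rV[F]_l) (y : 'I_k -> 'rV[F]_b),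
          #|[set r : 'rV[F]_e | [forall i in U, share A R x r i == y i]]| =
          #|[set r : 'rV[F]_e | [forall i in U, share A R x' r i == y i]]|)].

Definition t_private_adv (k t : nat) (T : {set {set 'I_k}}) : Prop :=
  forall U : {set 'I_k}, (#|U| <= t)%N -> U \in T.

Definition code_rate (F : finFieldType) (k b : nat)
  (C : {vspace {ffun 'I_k -> 'rV[F]_b}}) : rat :=
  (\dim C)%:R / (b * k)%:R.

Definition code_dist_ge (F : finFieldType) (k b : nat)
  (C : {vspace {ffun 'I_k -> 'rV[F]_b}}) (d : nat) : Prop :=
  forall c c', c \in C -> c' \in C -> c != c' ->
    (d <= #|[set i : 'I_k | c i != c' i]|)%N.

(* Main.v *)
Require Import Defs.
From HB Require Import structures.
From mathcomp Require Import all_boot all_order all_algebra all_field.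
Import GRing.Theory Num.Theory.
Set Implicit Arguments. Unset Strict Implicit.
Local Open Scope ring_scope.

Definition fD (F : fieldType) k b l (D : 'I_k -> 'M[F]_(b,l)) (z : 'cV[F]_l)
  : {ffun 'I_k -> 'rV[F]_b} := [ffun i => (D i *m z)^T].

Lemma fD_lin (F : fieldType) k b l (D : 'I_k -> 'M[F]_(b,l)) :
  linear (fD D).
Proof.
move=> a u v; apply/ffunP => i; rewrite !ffunE mulmxDr -scalemxAr.
by rewrite linearD linearZ.
Qed.

HB.instance Definition _ (F : fieldType) k b l (D : 'I_k -> 'M[F]_(b,l)) :=
  GRing.isLinear.Build F 'cV[F]_l {ffun 'I_k -> 'rV[F]_b} _ (fD D) (fD_lin D).

Lemma dimcv (F : fieldType) l : \dim {: 'cV[F]_l} = l.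
Proof. by rewrite dimvf /dim /= muln1. Qed.
Definition flat (F : fieldType) k b (c : {ffun 'I_k -> 'rV[F]_b}) : 'rV[F]_(k*b) :=
  mxvec (\matrix_(i,j) c i 0 j).

Lemma flatE (F : fieldType) k b (c : {ffun 'I_k -> 'rV[F]_b}) i j :
  flat c 0 (mxvec_index i j) = c i 0 j.
Proof. by rewrite /flat mxvecE mxE. Qed.

Lemma flat_lin (F : fieldType) k b : linear (@flat F k b).
Proof.
move=> a u v; apply/rowP => q; case/mxvec_indexP: q => i j.
by rewrite !mxE !flatE !ffunE !mxE.
Qed.

HB.instance Definition _ (F : fieldType) k b :=
  GRing.isLinear.Build F {ffun 'I_k -> 'rV[F]_b} 'rV[F]_(k*b) _ (@flat F k b) (@flat_lin F k b).

Definition blockof k b (q : 'I_(k*b)) : 'I_k :=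
  (enum_val (cast_ord (esym (@mxvec_cast k b)) q)).1.

Lemma blockofE k b (i : 'I_k) (j : 'I_b) : blockof (mxvec_index i j) = i.
Proof. by rewrite /blockof /mxvec_index cast_ordK enum_rankK. Qed.

Definition Pc (F : fieldType) k b (U : {set 'I_k}) : 'M[F]_(k*b) :=
  \matrix_(p,q) ((p == q) && (blockof q \notin U))%:R.

Lemma PcT (F : fieldType) k b (U : {set 'I_k}) : (Pc F b U)^T = Pc F b U.
Proof.
apply/matrixP => p q; rewrite !mxE; case: (eqVneq p q) => [->|]; by [].
Qed.

Lemma mulPc (F : fieldType) k b (U : {set 'I_k}) (s : 'rV[F]_(k*b)) q :
  (s *m Pc F b U) 0 q = if blockof q \notin U then s 0 q else 0.
Proof.
rewrite mxE (bigD1 q) //= big1 ?addr0; last first.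
  by move=> p /negbTE hp; rewrite mxE hp mulr0.
by rewrite mxE eqxx /=; case: ifP; rewrite ?mulr1 ?mulr0.
Qed.

Definition Sel (F : fieldType) k b (i : 'I_k) : 'M[F]_(k*b, b) :=
  \matrix_(p,j) (p == mxvec_index i j)%:R.

Lemma mulSel (F : fieldType) k b (s : 'rV[F]_(k*b)) i j :
  (s *m Sel F b i) 0 j = s 0 (mxvec_index i j).
Proof.
rewrite mxE (bigD1 (mxvec_index i j)) //= big1 ?addr0; last first.
  by move=> p /negbTE hp; rewrite mxE hp mulr0.
by rewrite mxE eqxx mulr1.
Qed.

Definition blk (F : fieldType) k b n (M : 'M[F]_(k*b, n)) (i : 'I_k) : 'M[F]_(b, n) :=
  \matrix_(j, c) M (mxvec_index i j) c.

Lemma sum_Sel (F : fieldType) k b n (M : 'M[F]_(k*b, n)) (s : 'rV[F]_(k*b)) :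
  \sum_i (s *m Sel F b i) *m blk M i = s *m M.
Proof.
apply/rowP => c; rewrite summxE mxE (reindex _ (curry_mxvec_bij _ _)) /=.
under eq_bigr => i _ do rewrite mxE.
rewrite pair_bigA /=; apply: eq_bigr => -[i j] _ /=.
by rewrite mulSel mxE.
Qed.
Lemma flat_inj (F : fieldType) k b (c : {ffun 'I_k -> 'rV[F]_b}) :
  flat c = 0 -> c = 0.
Proof.
move=> hc; apply/ffunP => i; apply/rowP => j.
by rewrite !ffunE !mxE -flatE hc mxE.
Qed.

Lemma PcSel (F : fieldType) k b (U : {set 'I_k}) (s : 'rV[F]_(k*b)) i :
  i \in U -> s *m Pc F b U *m Sel F b i = 0.
Proof.
move=> hi; apply/rowP => j; rewrite mulSel mulPc blockofE hi mxE //.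
Qed.

Lemma dir2 (F : finFieldType) (t k b l : nat) (hl : (0 < l)%N)
  (C : {vspace {ffun 'I_k -> 'rV[F]_b}}) (hlC : (l <= \dim C)%N)
  (hd : code_dist_ge C t.+1) :
  exists e (A : 'I_k -> 'M[F]_(l, b)) (R : 'I_k -> 'M[F]_(e, b))
    (T : {set {set 'I_k}}), is_LMSSS [set [set: 'I_k]] T A R /\ t_private_adv t T.
Proof.
set m := \dim C.
pose X := vbasis C.
have Xfree : free X := basis_free (vbasisP C).
have XC : forall i : 'I_m, X`_i \in C.
  by move=> i; apply: vbasis_mem; apply: mem_nth; rewrite size_tuple.
pose cz (z : 'rV[F]_m) := \sum_(i < m) z 0 i *: X`_i.
have czC : forall z, cz z \in C.
  by move=> z; apply: memv_suml => i _; apply: memvZ.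
have cz0 : forall z, cz z = 0 -> z = 0.
  move=> z hz; apply/rowP => i; rewrite mxE.
  by move/freeP: Xfree => /(_ (fun i => z 0 i) hz i).
pose Bm : 'M[F]_(m, k*b) := \matrix_(i < m) flat X`_i.
have BmE : forall z, z *m Bm = flat (cz z).
  move=> z; rewrite mulmx_sum_row linear_sum; apply: eq_bigr => i _.
  by rewrite rowK linearZ.
have [B' hB'] : exists B', Bm *m B' = 1%:M.
  apply/row_freeP; apply/inj_row_free => z; rewrite BmE => /flat_inj; exact: cz0.
pose E0 := B'^T.
have E0B : E0 *m Bm^T = 1%:M by rewrite -trmx_mul hB' trmx1.
pose E : 'M[F]_(l, k*b) := pid_mx l *m E0.
pose Rm : 'M[F]_(k*b) := 1%:M - Bm^T *m E0.
pose Df : 'M[F]_(k*b, l) := Bm^T *m pid_mx l.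
have EDf : E *m Df = 1%:M.
  rewrite /E /Df mulmxA -(mulmxA (pid_mx l)) E0B mulmx1 pid_mx_id //.
  by rewrite pid_mx_1.
have RDf : Rm *m Df = 0.
  by rewrite /Rm /Df mulmxBl mul1mx !mulmxA -[Bm^T *m E0 *m Bm^T]mulmxA E0B mulmx1 subrr.
have shareE : forall x r i, share (fun i => E *m Sel F b i) (fun i => Rm *m Sel F b i) x r i
    = (x *m E + r *m Rm) *m Sel F b i.
  by move=> x r i; rewrite /share mulmxDl !mulmxA.
pose T := [set U : {set 'I_k} | (#|U| <= t)%N].
have tk : (t < k)%N.
  have m0 : (0 < m)%N by apply: leq_trans hlC.
  have c0 : X`_(Ordinal m0) != 0.
    by apply: (free_not0 Xfree); apply: mem_nth; rewrite size_tuple.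
  have := hd _ 0 (XC _) (mem0v _) c0.
  move/leq_trans; apply; rewrite (leq_trans (max_card _)) // card_ord //.
exists (k*b)%N, (fun i => E *m Sel F b i), (fun i => Rm *m Sel F b i), T.
split; last by move=> U hU; rewrite inE.
split.
- move=> Q Q'; rewrite !inE => /eqP -> hs.
  by rewrite eqEsubset subsetT hs.
- move=> U U'; rewrite !inE => hU hs; exact: leq_trans (subset_leq_card hs) hU.
- rewrite -setI_eq0; apply/eqP/setP => Q; rewrite !inE.
  apply/negbTE/negP => /andP [/eqP ->]; rewrite cardsT card_ord.
  by rewrite leqNgt tk.
- move=> Q; rewrite inE => /eqP ->; exists (blk Df) => x r.
  rewrite (eq_bigl xpredT); last by move=> i; rewrite in_setT.
  under eq_bigr => i _ do rewrite shareE.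
  by rewrite sum_Sel mulmxDl -mulmxA -(mulmxA r) EDf RDf mulmx0 mulmx1 addr0.
move=> U; rewrite inE => hU x x' y.
pose w := (x - x') *m E.
pose v := w - w *m Pc F b U.
have hfull : row_full (Pc F b U *m Bm^T).
  rewrite /row_full -mxrank_tr trmx_mul trmxK PcT.
  change (row_free (Bm *m Pc F b U)); apply/inj_row_free => z.
  rewrite mulmxA BmE => hz.
  apply: cz0; apply/eqP; apply: contraT => hne.
  move: (hd _ 0 (czC z) (mem0v _) hne); rewrite ltnNge => /negbTE <-.
  apply: leq_trans hU; apply: subset_leq_card; apply/subsetP => i.
  rewrite inE ffunE => hi.
  apply: contraR hi => hiU; apply/eqP/rowP => j; rewrite mxE.
  have := congr1 (fun M : 'rV[F]_(k*b) => M 0 (mxvec_index i j)) hz.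
  by rewrite /= mulPc blockofE hiU flatE mxE.
have /submxP [tau htau] : ((- (v *m Bm^T)) <= Pc F b U *m Bm^T)%MS.
  exact: submx_full.
pose d := v + tau *m Pc F b U.
have dB : d *m Bm^T = 0 by rewrite mulmxDl -mulmxA -htau addrN.
have dR : d *m Rm = d by rewrite mulmxBr mulmx1 mulmxA dB mul0mx subr0.
have dU : forall i, i \in U -> d *m Sel F b i = w *m Sel F b i.
  by move=> i hi; rewrite /d /v !mulmxDl mulNmx !PcSel // oppr0 !addr0.
have key : forall r i, i \in U ->
    share (fun i => E *m Sel F b i) (fun i => Rm *m Sel F b i) x (r - d) i =
    share (fun i => E *m Sel F b i) (fun i => Rm *m Sel F b i) x' r i.
  move=> r i hi; rewrite !shareE mulmxBl dR !mulmxDl mulNmx dU //.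
  by rewrite /w !mulmxBl opprB addrCA [_ + (_ - _)]addrC addrNK addrC.
rewrite -(card_preimset _ (addIr (- d))).
apply: eq_card => r; rewrite !inE.
apply: eq_forallb_in => i hi; rewrite key //.

Qed.
Lemma dir1 (F : finFieldType) (t k b l : nat) e (A : 'I_k -> 'M[F]_(l, b))
  (R : 'I_k -> 'M[F]_(e, b)) (T : {set {set 'I_k}}) :
  is_LMSSS [set [set: 'I_k]] T A R -> t_private_adv t T ->
  exists C : {vspace {ffun 'I_k -> 'rV[F]_b}},
      l%:R / (k * b)%:R <= code_rate C /\ code_dist_ge C t.+1.
Proof.
case=> _ _ _ recon priv tpr.
have [D HD] := recon _ (set11 [set: 'I_k]).
have key : forall (x : 'rV[F]_l) (r : 'rV[F]_e) (z : 'cV[F]_l), \sum_i share A R x r i *m D i *m z = x *m z.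
  move=> x r z; rewrite -[RHS](congr1 (mulmx^~ z) (HD x r)) /= mulmx_suml.
  by apply: eq_bigl => i; rewrite in_setT.
pose g := linfun (fD D).
have gE : forall z, g z = fD D z by move=> z; rewrite lfunE.
have ginj : forall z, fD D z = 0 -> z = 0.
  move=> z hz; apply/row_matrixP => j; rewrite row0 rowE -(key _ 0).
  apply: big1 => i _.
  have : fD D z i = 0 by rewrite hz ffunE.
  by rewrite ffunE -mulmxA => /(congr1 trmx); rewrite trmxK trmx0 => ->; rewrite mulmx0.
exists (limg g); split.
  rewrite /code_rate limg_dim_eq; first by rewrite dimcv [(b * k)%N]mulnC.
  apply/eqP; rewrite -subv0; apply/subvP => z; rewrite memv_cap memv_ker memv0.
  by case/andP => _ /eqP; rewrite gE => /ginj ->.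
move=> c c' hc hc' hne.
have /memv_imgP [z _ hz] : c - c' \in limg g by rewrite memvB.
rewrite gE in hz.
rewrite ltnNge; apply/negP => hU.
set U := [set i | c i != c' i] in hU.
have UT := tpr _ hU.
have zn0 : z != 0.
  by apply: contra hne => /eqP z0; rewrite -subr_eq0 hz z0 linear0.
have [j hj] : exists j, row j z != 0.
  apply/existsP; apply: contraR zn0; rewrite negb_exists => /forallP h.
  by apply/eqP/row_matrixP => j; rewrite row0; apply/eqP; move: (h j); rewrite negbK.
have out : forall i, i \notin U -> D i *m z = 0.
  move=> i; rewrite inE negbK => /eqP ci.
  have : fD D z i = 0 by rewrite -hz !ffunE ci subrr.
  by rewrite ffunE => /(congr1 trmx); rewrite trmxK trmx0.
have restr : forall s : 'I_k -> 'rV[F]_b,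
    \sum_i s i *m D i *m z = \sum_(i in U) s i *m D i *m z.
  move=> s; rewrite (bigID (mem U)) /= [X in _ + X]big1 ?addr0 //.
  by move=> i hi; rewrite -mulmxA out ?mulmx0.
pose x' : 'rV[F]_l := delta_mx 0 j.
pose y := fun i => share A R x' 0 i.
have := priv U UT x' 0 y.
have h0 : (0 : 'rV[F]_e) \in [set r | [forall i in U, share A R x' r i == y i]].
  by rewrite inE; apply/forall_inP.
move=> hcard.
have : (0 < #|[set r : 'rV[F]_e | [forall i in U, share A R 0 r i == y i]]|)%N.
  by rewrite -hcard; apply/card_gt0P; exists 0.
case/card_gt0P => r; rewrite inE => /forall_inP hr.
have e1 := key x' 0 z; have e2 := key 0 r z.
rewrite restr in e1; rewrite restr mul0mx in e2.
move: hj; rewrite rowE -/x' -e1.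
under eq_bigr => i hi do rewrite -[share A R x' 0 i]/(y i) -(eqP (hr i hi)).
by rewrite e2 eqxx.
Qed.

Unset Implicit Arguments.

Theorem mainTheorem2 (F : finFieldType) (t k b l : nat)
  (ht : (0 < t)%N) (hk : (0 < k)%N) (hb : (0 < b)%N) (hl : (0 < l)%N)
  (hlbk : (l < b * k)%N) :
  (exists (e : nat) (A : 'I_k -> 'M[F]_(l, b)) (R : 'I_k -> 'M[F]_(e, b))
          (T : {set {set 'I_k}}),
      is_LMSSS [set [set: 'I_k]] T A R /\ t_private_adv t T)
  <->
  (exists C : {vspace {ffun 'I_k -> 'rV[F]_b}},
      l%:R / (k * b)%:R <= code_rate C /\ code_dist_ge C t.+1).
Proof.
split.
  by case=> e [A [R [T [h1 h2]]]]; exact: dir1 h1 h2.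
case=> C [hr hd]; apply: (dir2 hl _ hd).
move: hr; rewrite /code_rate [(b * k)%N]mulnC ler_pM2r ?ler_nat //.
by rewrite invr_gt0 ltr0n muln_gt0 hk hb.
Qed.
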